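(* There is an absolute constant $C>0$ such that for every $\varepsilon\in(0,1/2)$, every $m\geq1$ and every family of $m$ linear orders $\leq_1,\dots,\leq_m$ on a finite set $V$, the $(1/2-\varepsilon)$-majority digraph of $(\leq_1,\dots,\leq_m)$ has domination number at most $C/\varepsilon^2$.
   Context: For $c\in[0,1]$, the $c$-majority digraph of linear orders $\leq_1,\dots,\leq_m$ on $V$ is the digraph on $V$ with an arc $xy$ ($x\neq y$) whenever $|\{i\in[m]:x<_iy\}|\geq cm$. The domination number of a digraph is the minimum size of a set $X$ such that every vertex $v$ is in $X$ or has an in-neighbour in $X$. *)

(* Defs.v *)
From mathcomp Require Import all_boot all_order all_algebra.
From mathcomp Require Import reals.
Set Implicit Arguments. Unset Strict Implicit. Unset Printing Implicit Defensive.
Import Order.TTheory GRing.Theory Num.Theory.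

Definition linear_order (V : finType) (le : rel V) : Prop :=
  [/\ reflexive le, antisymmetric le, transitive le & total le].

Definition nb_below (V : finType) (m : nat) (ord : 'I_m -> rel V) (x y : V) : nat :=
  #|[set i : 'I_m | ord i x y && (x != y)]|.

Definition majority_arc (R : realType) (c : R) (V : finType) (m : nat)
  (ord : 'I_m -> rel V) : rel V :=
  fun x y => (x != y) && (c * m%:R <= (nb_below ord x y)%:R)%R.

Definition dominating (V : finType) (E : rel V) (X : {set V}) : bool :=
  [forall v, (v \in X) || [exists u in X, E u v]].

(* Domination number: minimum size of a dominating set (setT always dominates). *)
Definition domination_number (V : finType) (E : rel V) : nat :=
  \big[minn/#|V|]_(X : {set V} | dominating E X) #|X|.

(* Main.v *)
Require Import Defs.
From mathcomp Require Import all_boot all_order all_algebra.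
From mathcomp Require Import reals.
From mathcomp Require Import zify ring lra.
Import Order.TTheory GRing.Theory Num.Theory.
Set Implicit Arguments. Unset Strict Implicit. Unset Printing Implicit Defensive.

Section Walk.
Variable n : nat.
Local Open Scope ring_scope.

Definition sgb (b : bool) : int := if b then 1 else -1.
Definition flip (j : 'I_n) (s : {ffun 'I_n -> bool}) : {ffun 'I_n -> bool} :=
  [ffun k => if k == j then ~~ s k else s k].

Lemma flipK j : involutive (flip j).
Proof.
move=> s; apply/ffunP => k; rewrite !ffunE; case: eqP => //= ->.
by rewrite negbK.
Qed.

Lemma sum_flip j (F : {ffun 'I_n -> bool} -> int) :
  (forall s, F (flip j s) = F s) -> \sum_(s : {ffun 'I_n -> bool}) F s * sgb (s j) = 0.
Proof.
move=> HF.
have e : \sum_(s : {ffun 'I_n -> bool}) F s * sgb (s j) = \sum_(s : {ffun 'I_n -> bool}) F (flip j s) * sgb (flip j s j).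
  exact: (reindex_inj (inv_inj (flipK j))).
have e2 : \sum_(s : {ffun 'I_n -> bool}) F (flip j s) * sgb (flip j s j) = - \sum_(s : {ffun 'I_n -> bool}) F s * sgb (s j).
  rewrite -sumrN; apply: eq_bigr => s _.
  by rewrite HF ffunE eqxx; case: (s j); rewrite /sgb /=; ring.
move: e; rewrite e2; set X := \sum_(s : {ffun 'I_n -> bool}) _ => e; lia.
Qed.

Definition Spart (rho : 'I_n -> nat) (t : nat) (s : {ffun 'I_n -> bool}) : int :=
  \sum_(j | (rho j < t)%N) sgb (s j).

Lemma S_flip rho t j s : (t <= rho j)%N -> Spart rho t (flip j s) = Spart rho t s.
Proof.
move=> h; apply: eq_bigr => k hk; rewrite ffunE; case: eqP => // ek.
by move: hk; rewrite ek; lia.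
Qed.

Lemma sgb_sq b : sgb b * sgb b = 1.
Proof. by case: b. Qed.

Lemma sum_sq (P : pred 'I_n) :
  \sum_(s : {ffun 'I_n -> bool}) (\sum_(j | P j) sgb (s j)) ^+ 2 = (2 ^ n * #|P|)%:R.
Proof.
under eq_bigr => s _ do rewrite expr2 big_distrlr /=.
rewrite exchange_big /=.
under eq_bigr => j Pj do rewrite exchange_big /=.
rewrite -sum1_card natrM natr_sum mulr_sumr.
apply: eq_bigr => j Pj; rewrite mulr1.
rewrite (bigD1 j) //= [X in _ + X]big1; last first.
  move=> k /andP [_ kj].
  under eq_bigr => s _ do rewrite mulrC.
  apply: sum_flip => s; rewrite ffunE.
  by case: eqP => // e; move: kj; rewrite e eqxx.
rewrite addr0.
under eq_bigr => s _ do rewrite sgb_sq.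
by rewrite sumr_const card_ffun card_bool card_ord.
Qed.

Definition Mx (rho : 'I_n -> nat) (B : nat) (s : {ffun 'I_n -> bool}) : nat :=
  \max_(t < B.+1) `|Spart rho t s|%N.

Lemma le_sq_abs (z : int) (a : nat) : (a <= `|z|)%N -> (a%:Z)^+2 <= z ^+ 2.
Proof. move=> h; nia. Qed.

Section Kolmo.
Variables (rho : 'I_n -> nat) (B a : nat).
Definition II (t : nat) (s : {ffun 'I_n -> bool}) : bool :=
  (a <= `|Spart rho t s|)%N && [forall u : 'I_t, (`|Spart rho u s| < a)%N].

Lemma II_flip t j s : (t <= rho j)%N -> II t (flip j s) = II t s.
Proof.
move=> h; rewrite /II S_flip //; congr (_ && _).
apply: eq_forallb => u; rewrite S_flip //.
by apply: leq_trans h; apply: ltnW.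
Qed.

Lemma step1 s : (a <= Mx rho B s)%N ->
  (a%:Z) ^+ 2 <= \sum_(t < B.+1) (if II t s then Spart rho t s ^+ 2 else 0).
Proof.
move=> ha.
have [t0 ht0] : exists t : 'I_B.+1, (a <= `|Spart rho t s|)%N.
  apply/existsP; apply: contraLR ha => /existsPn hn.
  rewrite -ltnNge; case: a hn => [|a'] hn.
    by have := hn ord0.
  rewrite ltnS; apply/bigmax_leqP => t _; have := hn t; rewrite -ltnNge ltnS.
  done.
have exP : exists t, (t < B.+1)%N && (a <= `|Spart rho t s|)%N.
  by exists t0; rewrite ltn_ord ht0.
case: (ex_minnP exP) => tm /andP [htm hatm] hmin.
rewrite (bigD1 (Ordinal htm)) //=.
have -> : II tm s = true.
  rewrite /II hatm /=; apply/forallP => u; rewrite ltnNge; apply/negP => hu.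
  have := hmin u; rewrite hu andbT.
  have hu2 : (u < B.+1)%N by apply: (leq_trans (ltn_ord u)); apply: ltnW.
  by rewrite hu2 => /(_ isT); rewrite leqNgt ltn_ord.
apply: (le_trans (le_sq_abs hatm)); rewrite lerDl; apply: sumr_ge0 => t _.
by case: ifP => // _; exact: sqr_ge0.
Qed.

Lemma step3 s (X : int) : 0 <= X ->
  \sum_(t < B.+1) (if II t s then X else 0) <= X.
Proof.
move=> X0.
case: (pickP (fun t : 'I_B.+1 => II t s)) => [t Ht|hn]; last first.
  by rewrite big1 // => t _; rewrite hn.
rewrite (bigD1 t) //= Ht big1 ?addr0 // => u ut.
case: ifP => // Hu; exfalso.
case: (ltngtP t u) => [tu|ut'|e]; last by move: ut; rewrite (val_inj e) eqxx.
- move: Hu => /andP [_ /forallP /(_ (Ordinal tu))] /=.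
  by move: Ht => /andP [h _]; rewrite ltnNge h.
- move: Ht => /andP [_ /forallP /(_ (Ordinal ut'))] /=.
  by move: Hu => /andP [h _]; rewrite ltnNge h.
Qed.

Lemma step2 (t : nat) : (t <= B)%N ->
  \sum_(s : {ffun 'I_n -> bool}) (if II t s then Spart rho t s ^+ 2 else 0) <=
  \sum_(s : {ffun 'I_n -> bool}) (if II t s then Spart rho B s ^+ 2 else 0).
Proof.
move=> tB.
pose Rr (s : {ffun 'I_n -> bool}) :=
  \sum_(j | (rho j < B)%N && ~~ (rho j < t)%N) sgb (s j).
have eB s : Spart rho B s = Spart rho t s + Rr s.
  rewrite /Spart (bigID (fun j => (rho j < t)%N)) /=; congr (_ + _).
  apply: eq_bigl => j; case: (ltnP (rho j) t) => h; rewrite ?andbT ?andbF //.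
  exact: leq_trans h tB.
have z : \sum_(s : {ffun 'I_n -> bool}) (if II t s then Spart rho t s else 0) * Rr s = 0.
  under eq_bigr => s _ do rewrite /Rr mulr_sumr.
  rewrite exchange_big /=; apply: big1 => j /andP [_ hj].
  apply: sum_flip => s; rewrite II_flip ?S_flip //; by rewrite leqNgt.
have : \sum_(s : {ffun 'I_n -> bool}) (if II t s then Spart rho t s ^+ 2 else 0) +
       2%:R * \sum_(s : {ffun 'I_n -> bool}) (if II t s then Spart rho t s else 0) * Rr s <=
       \sum_(s : {ffun 'I_n -> bool}) (if II t s then Spart rho B s ^+ 2 else 0).
  rewrite mulr_sumr -big_split /=; apply: ler_sum => s _.
  case: ifP => _; last by rewrite mul0r mulr0 addr0.
  rewrite eB; set x := Spart rho t s; set y := Rr s; nia.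
by rewrite z mulr0 addr0.
Qed.

Lemma kolmo :
  (a%:Z) ^+ 2 * (#|[set s | (a <= Mx rho B s)%N]|)%:R <=
  \sum_(s : {ffun 'I_n -> bool}) Spart rho B s ^+ 2.
Proof.
rewrite -sum1_card natr_sum mulr_sumr.
apply: (le_trans (y := \sum_(s : {ffun 'I_n -> bool})
   \sum_(t < B.+1) (if II t s then Spart rho t s ^+ 2 else 0))).
  rewrite [X in _ <= X](bigID (fun s => s \in [set s | (a <= Mx rho B s)%N])) /=.
  apply: ler_wpDr.
    apply: sumr_ge0 => s _; apply: sumr_ge0 => t _; case: ifP => // _; exact: sqr_ge0.
  by apply: ler_sum => s; rewrite inE => h; rewrite mulr1; apply: step1.
rewrite exchange_big /=.
apply: (le_trans (y := \sum_(t < B.+1) \sum_(s : {ffun 'I_n -> bool})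
   (if II t s then Spart rho B s ^+ 2 else 0))).
  by apply: ler_sum => t _; apply: step2; rewrite -ltnS.
rewrite exchange_big /=; apply: ler_sum => s _; apply: step3; exact: sqr_ge0.
Qed.
End Kolmo.
End Walk.

Local Open Scope ring_scope.
Lemma sum_lt_min (N M : nat) : (\sum_(a < N) (a < M)%N)%N = minn N M.
Proof.
elim: N => [|N IH]; first by rewrite big_ord0 min0n.
by rewrite big_ord_recr /= IH; case: (ltnP N M) => h; lia.
Qed.

Lemma Mx_le n rho B s : (Mx (n:=n) rho B s <= n)%N.
Proof.
apply/bigmax_leqP => t _.
have : `|Spart rho t s| <= n%:R :> int.
  apply: (le_trans (ler_norm_sum _ _ _)).
  apply: (le_trans (y := \sum_(j < n) 1)); last by rewrite sumr_const card_ord.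
  rewrite [X in _ <= X](bigID (fun j => (rho j < t)%N)) /=.
  apply: ler_wpDr; first by apply: sumr_ge0.
  by apply: ler_sum => j _; case: (s j) => /=; rewrite ?normrN normr1.
lia.
Qed.

Section WalkR.
Variable R : realType.
Local Open Scope ring_scope.

Lemma inv_tele (nn y : R) : 0 <= nn -> 1 <= y ->
  nn / (y + 1) ^+ 2 <= nn / y - nn / (y + 1).
Proof.
move=> h0 h1.
have y0 : 0 < y by lra.
have e : nn / y - nn / (y + 1) = nn / (y * (y + 1)).
  field; apply/andP; split; rewrite ?gt_eqF //; lra.
rewrite e; apply: ler_wpM2l => //.
rewrite lef_pV2 ?posrE; [nra|nra|nra].
Qed.

Lemma series_bound (x : nat -> R) (nn : R) (q : nat) : (0 < q)%N -> 0 <= nn ->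
  (forall a, x a <= 1) -> (forall a, x a <= nn / (a.+1)%:R ^+ 2) ->
  forall N, \sum_(a < N) x a <= q%:R + nn / q%:R.
Proof.
move=> q0 nn0 h1 h2 N.
have hq : 0 < q%:R :> R by rewrite ltr0n.
have base : forall N', (N' <= q)%N -> \sum_(a < N') x a <= N'%:R.
  move=> N' _; apply: (le_trans (y := \sum_(a < N') 1)).
    by apply: ler_sum => a _.
  by rewrite sumr_const card_ord.
case: (leqP N q) => hN.
  apply: (le_trans (base N hN)); apply: ler_wpDr; first by apply: divr_ge0.
  by rewrite ler_nat.
have gen : forall d, \sum_(a < q + d) x a <= q%:R + nn / q%:R - nn / (q + d)%:R.
  elim => [|d IH]; first by rewrite addn0 addrK; apply: base.
  rewrite addnS big_ord_recr /=.
  have t := inv_tele (y := (q + d)%:R) nn0.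
  have hy : 1 <= (q + d)%:R :> R by rewrite ler1n; lia.
  have := t hy; have := h2 (q + d).
  have e1 : ((q + d).+1)%:R = (q + d)%:R + 1 :> R by rewrite natr1.
  rewrite e1.
  lra.
have := gen (N - q)%N; rewrite subnKC; last by apply: ltnW.
have : 0 <= nn / N%:R by apply: divr_ge0.
lra.
Qed.

Lemma walk_bound n (rho : 'I_n -> nat) B :
  \sum_(s : {ffun 'I_n -> bool}) (Mx rho B s)%:R <= (2 ^ n)%:R * (3 * Num.sqrt n%:R) :> R.
Proof.
case: n rho => [|n] rho.
  rewrite big1; first by apply: mulr_ge0 => //; apply: mulr_ge0 => //; apply: sqrtr_ge0.
  move=> s _.
  by have := Mx_le rho B s; rewrite leqn0 => /eqP ->.
set N := n.+1.
have e : forall s, (Mx rho B s)%:R = \sum_(a < N) ((a < Mx rho B s)%N)%:R :> R.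
  move=> s; rewrite -natr_sum sum_lt_min; congr (_%:R).
  by symmetry; apply/minn_idPr; apply: Mx_le.
under eq_bigr => s _ do rewrite e.
rewrite exchange_big /=.
have P2 : (0 < (2 ^ N)%:R :> R) by rewrite ltr0n expn_gt0.
pose x (a : nat) : R := #|[set s | (a.+1 <= Mx rho B s)%N]|%:R / (2 ^ N)%:R.
have ex : forall a : 'I_N, \sum_(s : {ffun 'I_N -> bool}) ((a < Mx rho B s)%N)%:R = (2 ^ N)%:R * x a.
  move=> a; rewrite /x mulrC divfK ?gt_eqF //.
  rewrite -sum1_card natr_sum [RHS]big_mkcond /=; apply: eq_bigr => s _.
  by rewrite inE; case: ifP.
under eq_bigr => a _ do rewrite ex.
rewrite -mulr_sumr; apply: ler_wpM2l; first by apply: ltW.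
have x1 : forall a, x a <= 1.
  move=> a; rewrite /x ler_pdivrMr // mul1r ler_nat.
  by apply: (leq_trans (max_card _)); rewrite card_ffun card_bool card_ord.
have x2 : forall a, x a <= N%:R / (a.+1)%:R ^+ 2.
  move=> a; have k := kolmo rho B a.+1.
  rewrite sum_sq in k.
  have k' : ((a.+1 ^ 2 * #|[set s | (a.+1 <= Mx rho B s)%N]|)%N <= 2 ^ N * #|[pred j | (rho j < B)%N]|)%N.
    move: k; rewrite /N; set c := #|_|; set p := #|_|; set w := (2 ^ n.+1)%N; nia.
  have k2 : ((a.+1 ^ 2 * #|[set s | (a.+1 <= Mx rho B s)%N]|)%N <= 2 ^ N * N)%N.
    apply: (leq_trans k'); rewrite leq_mul2l; apply/orP; right.
    by rewrite -[X in (_ <= X)%N]card_ord; apply: max_card.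
  rewrite /x ler_pdivrMr // mulrC mulrA ler_pdivlMr ?exprn_gt0 ?ltr0n //.
  by rewrite -natrX -!natrM ler_nat mulnC; rewrite mulnC in k2; lia.
have hs := sqrtr_ge0 (N%:R : R).
set r := Num.sqrt (N%:R : R).
have r2 : r ^+ 2 = N%:R by rewrite sqr_sqrtr // ler0n.
have r1 : 1 <= r.
  rewrite -(sqrtr1 R) ler_sqrt ?ler1n //.
pose q := (Num.truncn r).+1.
have hq1 : r < q%:R by apply: truncnS_gt.
have hq2 : q%:R <= r + 1 by rewrite /q -natr1 lerD2r truncn_le.
have q0 : (0 < q)%N by [].
have nn0 : 0 <= N%:R :> R by apply: ler0n.
apply: (le_trans (series_bound q0 nn0 x1 x2 N)).
have : N%:R / q%:R <= r.
  rewrite ler_pdivrMr; last by lra.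
  rewrite -r2 expr2; apply: ler_wpM2l => //; lra.
lra.
Qed.
End WalkR.

Section Orders.
Variables (V : finType) (m : nat) (ord : 'I_m -> rel V).

Definition rk (i : 'I_m) (x : V) : nat := #|[set y | ord i y x && (y != x)]|.

Definition G (x v : V) : nat :=
  (\sum_(i < m) ((rk i x < rk i v) + (rk i x <= rk i v)))%N.

Lemma G_sym x v : (G x v + G v x = 2 * m)%N.
Proof.
rewrite /G -big_split /=.
rewrite (eq_bigr (fun _ => 2%N)); first by rewrite sum_nat_const card_ord mulnC.
by move=> i _; case: (ltngtP (rk i x) (rk i v)) => h; lia.
Qed.

Lemma Mx_ge n (rho : 'I_n -> nat) B s u : (u <= B)%N ->
  - (Mx rho B s)%:R <= Spart rho u s :> int /\ Spart rho u s <= (Mx rho B s)%:R.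
Proof.
move=> hu.
have := leq_bigmax (F := fun t : 'I_B.+1 => `|Spart rho t s|%N) (Ordinal (hu : (u < B.+1)%N)).
rewrite -/(Mx rho B s) /=; lia.
Qed.

Lemma S_mk n (rho : 'I_n -> nat) t s :
  Spart rho t s = \sum_j sgb (s j) * ((rho j < t)%N)%:R.
Proof.
rewrite /Spart big_mkcond; apply: eq_bigr => j _; case: ifP => _; by rewrite ?mulr1 ?mulr0.
Qed.

Lemma rk_le i v : (rk i v <= #|V|)%N.
Proof. exact: max_card. Qed.

Definition Fsum n (f : 'I_(n + n) -> V) (s : {ffun 'I_n -> bool}) : nat :=
  (\sum_(i < m) (Mx (fun j => rk i (f (lshift n j))) #|V|.+1 s +
                 Mx (fun j => rk i (f (rshift n j))) #|V|.+1 s))%N.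

Definition gsel n (f : 'I_(n + n) -> V) (s : {ffun 'I_n -> bool}) (j : 'I_n) : V :=
  if s j then f (lshift n j) else f (rshift n j).

Lemma key n (f : 'I_(n + n) -> V) s v :
  (\sum_k G (f k) v <= (\sum_j G (gsel f s j) v + \sum_j G (gsel f s j) v) + (Fsum f s + Fsum f s))%N.
Proof.
set F := Fsum f s.
rewrite -(ler_nat int) big_split_ord !natrD.
set A := (\sum_(j < n) G (f (lshift n j)) v)%:R.
set Bb := (\sum_(j < n) G (f (rshift n j)) v)%:R.
set Cc := (\sum_(j < n) G (gsel f s j) v)%:R.
have e1 : A + Bb - 2%:R * Cc =
    - \sum_(j < n) sgb (s j) * ((G (f (lshift n j)) v)%:R - (G (f (rshift n j)) v)%:R).
  rewrite /A /Bb /Cc !natr_sum mulr_sumr -big_split /= -sumrB -sumrN; apply: eq_bigr => j _.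
  by rewrite /gsel; case: (s j) => /=; ring.
pose ra i j := rk i (f (lshift n j)).
pose rb i j := rk i (f (rshift n j)).
have e2 : \sum_(j < n) sgb (s j) * ((G (f (lshift n j)) v)%:R - (G (f (rshift n j)) v)%:R) =
   \sum_(i < m) (Spart (ra i) (rk i v) s + Spart (ra i) (rk i v).+1 s
                 - Spart (rb i) (rk i v) s - Spart (rb i) (rk i v).+1 s).
  under eq_bigr => j _ do rewrite /G !natr_sum -sumrB mulr_sumr.
  rewrite exchange_big /=; apply: eq_bigr => i _.
  rewrite !S_mk -big_split -!sumrB /=.
  apply: eq_bigr => j _; rewrite -/(ra i j) -/(rb i j) !ltnS !natrD.
  by case: (ra i j < rk i v)%N; case: (ra i j <= rk i v)%N;
     case: (rb i j < rk i v)%N; case: (rb i j <= rk i v)%N; rewrite /=; ring.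
have e3 : - \sum_(i < m) (Spart (ra i) (rk i v) s + Spart (ra i) (rk i v).+1 s
                 - Spart (rb i) (rk i v) s - Spart (rb i) (rk i v).+1 s) <= 2%:R * F%:R.
  rewrite /F /Fsum natr_sum mulr_sumr -sumrN; apply: ler_sum => i _.
  have h1 : (rk i v <= #|V|.+1)%N by apply: leqW; apply: rk_le.
  have h2 : ((rk i v).+1 <= #|V|.+1)%N by rewrite ltnS; apply: rk_le.
  have := Mx_ge (ra i) s h1; have := Mx_ge (ra i) s h2.
  have := Mx_ge (rb i) s h1; have := Mx_ge (rb i) s h2.
  rewrite natrD => H1 H2 H3 H4.
  rewrite /ra /rb /= in H1 H2 H3 H4 *; lia.
move: e1 e3; rewrite -e2 => e1 e3.
lia.
Qed.
End Orders.

Section Avg.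
Variable R : realType.
Local Open Scope ring_scope.
Lemma avg_exists (I : finType) (i0 : I) (F : I -> R) (c : R) :
  \sum_i F i <= #|I|%:R * c -> exists i, F i <= c.
Proof.
move=> h; case: (boolP [exists i, F i <= c]) => [/existsP //|/existsPn hn].
have : \sum_(i : I) c < \sum_i F i.
  apply: ltr_sum; first by apply/hasP; exists i0; rewrite ?mem_index_enum.
  by move=> i _; have := hn i; rewrite -ltNge.
rewrite sumr_const -mulr_natl; lra.
Qed.
End Avg.

Section Halve.
Variables (R : realType) (V : finType) (m : nat) (ord : 'I_m -> rel V).
Local Open Scope ring_scope.

Lemma halve n (f : 'I_(n + n) -> V) (beta : R) : (0 < n)%N ->
  (forall v, beta * (n + n)%:R <= (\sum_k G ord (f k) v)%:R) ->
  exists g : 'I_n -> V, forall v,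
    (beta - 6 * m%:R / Num.sqrt n%:R) * n%:R <= (\sum_j G ord (g j) v)%:R.
Proof.
move=> n0 hf.
set r := Num.sqrt (n%:R : R).
have r0 : 0 < r by rewrite sqrtr_gt0 ltr0n.
have rr : r * r = n%:R by rewrite -expr2 sqr_sqrtr // ler0n.
have [s hs] : exists s : {ffun 'I_n -> bool},
    (Fsum ord f s)%:R <= 6 * m%:R * r.
  apply: (avg_exists [ffun=> true]).
  rewrite card_ffun card_bool card_ord.
  under eq_bigr => s _ do rewrite /Fsum natr_sum.
  rewrite exchange_big /=.
  apply: (le_trans (y := \sum_(i < m) ((2 ^ n)%:R * (3 * r) + (2 ^ n)%:R * (3 * r)))).
    apply: ler_sum => i _; under eq_bigr => s' _ do rewrite natrD.
    rewrite big_split /=; apply: lerD; exact: walk_bound.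
  rewrite sumr_const card_ord -mulr_natl le_eqVlt; apply/predU1P; left; ring.
exists (gsel f s) => v.
have k := key ord f s v.
have k' : (\sum_k G ord (f k) v)%:R <= 2 * (\sum_j G ord (gsel f s j) v)%:R + 2 * (Fsum ord f s)%:R :> R.
  by move: k; rewrite -(ler_nat R) !natrD; lra.
have hv := hf v.
have e : 6 * m%:R / r * n%:R = 6 * m%:R * r.
  by rewrite -rr; field; rewrite gt_eqF.
have e2 : (beta - 6 * m%:R / r) * n%:R = beta * n%:R - 6 * m%:R * r.
  by rewrite mulrBl e.
rewrite e2; move: hv; rewrite natrD; lra.
Qed.
End Halve.

Section Pow.
Variable R : realType.
Local Open Scope ring_scope.

Lemma bern (x : R) n : 0 <= x -> 1 + n%:R * x <= (1 + x) ^+ n.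
Proof.
move=> x0; elim: n => [|n IH]; first by rewrite mul0r addr0 expr0.
rewrite exprS -natr1.
have h : 0 <= (1 + x) ^+ n by apply: exprn_ge0; lra.
have h2 : 0 <= n%:R * x by apply: mulr_ge0 => //; apply: ler0n.
nra.
Qed.

Lemma bern2 (a : R) n : 0 <= a -> (1 - n%:R * a) * (1 + a) ^+ n <= 1.
Proof.
move=> a0; elim: n => [|n IH]; first by rewrite mul0r subr0 expr0 mul1r.
have h : 1 <= (1 + a) ^+ n.+1 by apply: exprn_ege1; lra.
have e : (1 - n.+1%:R * a) * (1 + a) ^+ n.+1 =
   (1 + a) * ((1 - n%:R * a) * (1 + a) ^+ n) - a * (1 + a) ^+ n.+1.
  by rewrite -natr1 exprS; ring.
rewrite e; nra.
Qed.
End Pow.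

Section MWU.
Variables (R : realType) (V : finType) (m : nat) (ord : 'I_m -> rel V).
Variable theta : R.
Hypothesis m0 : (0 < m)%N.
Hypothesis th0 : 0 < theta.
Hypothesis th1 : theta <= 1 / 2.
Variable x0 : V.
Local Open Scope ring_scope.

Definition cc : R := theta / m%:R.
Definition W (s : seq V) (v : V) : R := ((1 + cc) ^+ (\sum_(u <- s) G ord u v))^-1.
Definition Phi s := \sum_v W s v.

Lemma th2 : 2 * theta <= 1.
Proof. by move: th1; rewrite ler_pdivlMr ?ltr0n // mulrC. Qed.

Lemma m0R : 0 < m%:R :> R. Proof. by rewrite ltr0n. Qed.
Lemma cc0 : 0 < cc. Proof. by apply: divr_gt0 => //; apply: m0R. Qed.
Lemma mcc : m%:R * cc = theta.
Proof. rewrite /cc mulrC divfK // gt_eqF //; apply: m0R. Qed.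

Lemma W_pos s v : 0 < W s v.
Proof. rewrite /W invr_gt0; apply: exprn_gt0; have := cc0; lra. Qed.

Lemma G_le2 x v : (G ord x v <= m + m)%N.
Proof. have := G_sym ord x v; lia. Qed.

Lemma exists_good s : exists u, m%:R * Phi s <= \sum_v W s v * (G ord u v)%:R.
Proof.
pose Fu u := \sum_v W s v * (G ord u v)%:R.
have sym : \sum_u W s u * Fu u = m%:R * Phi s ^+ 2.
  have e1 : \sum_u W s u * Fu u = \sum_u \sum_v W s u * W s v * (G ord u v)%:R.
    by apply: eq_bigr => u _; rewrite /Fu mulr_sumr; apply: eq_bigr => v _; rewrite mulrA.
  have e2 : \sum_u W s u * Fu u = \sum_u \sum_v W s u * W s v * (G ord v u)%:R.
    rewrite e1 exchange_big /=; apply: eq_bigr => u _; apply: eq_bigr => v _.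
    by rewrite (mulrC (W s v)).
  have e3 : (\sum_u W s u * Fu u) + (\sum_u W s u * Fu u) =
     \sum_u \sum_v W s u * W s v * (m + m)%:R.
    rewrite [X in X + _]e1 e2 -big_split /=; apply: eq_bigr => u _.
    rewrite -big_split /=; apply: eq_bigr => v _.
    by rewrite -mulrDr -natrD G_sym addnn -mul2n.
  have e4 : \sum_u \sum_v W s u * W s v * (m + m)%:R = (m + m)%:R * Phi s ^+ 2.
    rewrite expr2 /Phi mulr_suml mulr_sumr; apply: eq_bigr => u _.
    rewrite mulr_sumr mulr_sumr; apply: eq_bigr => v _; ring.
  move: e3; rewrite e4 natrD => e3.
  lra.
case: (boolP [exists u, m%:R * Phi s <= Fu u]) => [/existsP //|/existsPn hn].
have : \sum_u W s u * Fu u < \sum_u W s u * (m%:R * Phi s).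
  apply: ltr_sum; first by apply/hasP; exists x0; rewrite ?mem_index_enum.
  move=> u _; rewrite ltr_pM2l ?W_pos //; have := hn u; rewrite -ltNge //.
rewrite sym -mulr_suml -/(Phi s) expr2; lra.
Qed.


Lemma inv_bound (gn : nat) : (gn <= m + m)%N ->
  ((1 + cc) ^+ gn)^-1 <= 1 - cc * gn%:R + (m + m)%:R * cc ^+ 2 * gn%:R.
Proof.
move=> hg.
have c0 := cc0.
set g : R := gn%:R.
have g0 : 0 <= g by apply: ler0n.
have g2 : g <= (m + m)%:R by rewrite ler_nat.
have hb := bern gn (ltW c0); rewrite -/g in hb.
set y := (1 + cc) ^+ gn in hb *.
set z := cc * g.
have z0 : 0 <= z by apply: mulr_ge0 => //; apply: ltW.
have hb' : 1 + z <= y by rewrite /z mulrC.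
have y0 : 0 < y by lra.
have t0 : 0 < 1 - z + z ^+ 2 by nra.
apply: (le_trans (y := 1 - z + z ^+ 2)).
  rewrite -[y^-1]mul1r ler_pdivrMr //.
  have : 1 <= (1 + z) * (1 - z + z ^+ 2) by nra.
  have : (1 + z) * (1 - z + z ^+ 2) <= y * (1 - z + z ^+ 2).
    by apply: ler_wpM2r; [apply: ltW|].
  rewrite mulrC; lra.
rewrite /z; have : (cc * g) ^+ 2 <= (m + m)%:R * cc ^+ 2 * g.
  have h : 0 <= ((m + m)%:R - g) * (g * (cc * cc)).
    by apply: mulr_ge0; [lra| apply: mulr_ge0 => //; nra].
  rewrite !expr2; lra.
lra.
Qed.

Lemma stepW s : exists u, Phi (u :: s) <= Phi s * (1 - theta + 2 * theta ^+ 2).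
Proof.
have [u hu] := exists_good s.
exists u.
have e : forall v, W (u :: s) v = W s v * ((1 + cc) ^+ (G ord u v))^-1.
  by move=> v; rewrite /W big_cons exprD invfM mulrC.
have h : Phi (u :: s) <= \sum_v (W s v - (cc - (m + m)%:R * cc ^+ 2) * (W s v * (G ord u v)%:R)).
  apply: ler_sum => v _; rewrite e.
  have := inv_bound (G_le2 u v); have := W_pos s v.
  set w := W s v; set i := (_ ^+ _)^-1; set g := (G ord u v)%:R => w0 hi.
  have : w * i <= w * (1 - cc * g + (m + m)%:R * cc ^+ 2 * g) by apply: ler_wpM2l => //; apply: ltW.
  move=> hh; apply: (le_trans hh); rewrite le_eqVlt; apply/predU1P; left; ring.
apply: (le_trans h); rewrite sumrB -mulr_sumr -/(Phi s).
have k : 0 <= cc - (m + m)%:R * cc ^+ 2.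
  have : (m + m)%:R * cc ^+ 2 = 2 * theta * cc by rewrite natrD -mcc; ring.
  move=> ->; have c0 := cc0.
  have h2 : 0 <= cc * (1 - 2 * theta) by apply: mulr_ge0; [apply: ltW|have := th2; lra].
  lra.
have k2 : (cc - (m + m)%:R * cc ^+ 2) * (m%:R * Phi s) <=
          (cc - (m + m)%:R * cc ^+ 2) * \sum_v W s v * (G ord u v)%:R by apply: ler_wpM2l.
have e2 : (cc - (m + m)%:R * cc ^+ 2) * (m%:R * Phi s) = (theta - 2 * theta ^+ 2) * Phi s.
  by rewrite natrD -mcc; ring.
lra.
Qed.

Lemma mwu T : exists s : seq V, size s = T /\
  Phi s <= #|V|%:R * (1 - theta + 2 * theta ^+ 2) ^+ T.
Proof.
elim: T => [|T [s [hs hp]]].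
  exists [::]; split => //; rewrite expr0 mulr1 /Phi.
  rewrite (eq_bigr (fun _ => 1)); first by rewrite sumr_const.
  by move=> v _; rewrite /W big_nil expr0 invr1.
have [u hu] := stepW s.
exists (u :: s); split; first by rewrite /= hs.
have q0 : 0 <= 1 - theta + 2 * theta ^+ 2 by have := th2; nra.
apply: (le_trans hu); rewrite (exprSr _ T) mulrA; exact: ler_wpM2r.
Qed.
End MWU.

Section MWUFinal.
Variables (R : realType) (V : finType) (m : nat) (ord : 'I_m -> rel V).
Local Open Scope ring_scope.

Lemma mwu_final (r : nat) (x0 : V) : (0 < m)%N -> (0 < r)%N ->
  exists T0, forall T', (T0 <= T')%N -> exists s : seq V, size s = (r * T')%N /\
   forall v, (r.-1 * m * T' <= \sum_(u <- s) G ord u v)%N.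
Proof.
move=> m0 r0.
set R' : R := r%:R.
have hR : 1 <= R' by rewrite /R' ler1n.
set th : R := (2 * R' + 2)^-1.
have hpos : 0 < 2 * R' + 2 by lra.
have thE : th * (2 * R' + 2) = 1 by rewrite /th mulVf // gt_eqF.
have th0 : 0 < th by rewrite /th invr_gt0.
have th1 : th <= 1 / 2 by rewrite ler_pdivlMr //; nra.
have om : 0 < 1 - th by nra.
set a : R := 2 * th ^+ 2 / (1 - th).
have aE : a * (1 - th) = 2 * th ^+ 2 by rewrite /a divfK // gt_eqF.
have a0 : 0 <= a by apply: divr_ge0; [nra|lra].
set d : R := 1 - R' * a.
have Ra : R' * a < th.
  have h1 : R' * a * (1 - th) = th * (1 - 2 * th) by rewrite -mulrA aE; nra.
  have h2 : R' * a * (1 - th) < th * (1 - th) by rewrite h1; nra.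
  by move: h2; rewrite ltr_pM2r.
have d1 : 1 - th < d by rewrite /d; lra.
have qE : 1 - th + 2 * th ^+ 2 = (1 - th) * (1 + a) by rewrite mulrDr mulr1 (mulrC _ a) aE.
set kap : R := d / (1 - th).
have k1 : 1 < kap by rewrite /kap ltr_pdivlMr // mul1r.
set N : R := #|V|%:R.
set b : R := kap - 1.
have b0 : 0 < b by rewrite /b; lra.
exists (Num.truncn (N / b)).+1 => T' hT.
have [s [hs hp]] := mwu ord m0 th0 th1 x0 (r * T').
exists s; split => // v.
rewrite leqNgt; apply/negP => hlt.
set S := \sum_(u <- s) G ord u v in hlt.
set k := (r.-1 * T')%N.
set c := cc m th.
have c0 : 0 < c by apply: cc0.
have hm : m%:R * c = th by apply: mcc.
have hW : (1 - th) ^+ k <= W ord th s v.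
  rewrite /W -/S -/c.
  have e1 : ((1 + c) ^+ S <= ((1 + c) ^+ m) ^+ k).
    rewrite -exprM ler_eXn2l; last by lra.
    by rewrite /k mulnA (mulnC m); apply: ltnW.
  have e2 : (1 - th) * (1 + c) ^+ m <= 1.
    by have := bern2 m (ltW c0); rewrite hm.
  have e3 : ((1 + c) ^+ m) ^+ k <= ((1 - th)^-1) ^+ k.
    apply: lerXn2r; rewrite ?nnegrE ?exprn_ge0 ?invr_ge0 //; try lra.
    by rewrite -div1r ler_pdivlMr // mulrC.
  have e4 := le_trans e1 e3.
  rewrite exprVn in e4.
  have p1 : 0 < (1 + c) ^+ S by apply: exprn_gt0; lra.
  have p2 : 0 < (1 - th) ^+ k by apply: exprn_gt0.
  by rewrite -[X in X <= _]invrK lef_pV2 ?posrE ?invr_gt0.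
have hWP : W ord th s v <= Phi ord th s.
  rewrite /Phi (bigD1 v) //= lerDl; apply: sumr_ge0 => u _; apply: ltW; apply: W_pos => //.
have h1 := le_trans hW (le_trans hWP hp).
rewrite qE exprMn in h1.
have hd : d * (1 + a) ^+ r <= 1 by have := bern2 r a0.
have hd2 : d ^+ T' * (1 + a) ^+ (r * T') <= 1.
  rewrite exprM -exprMn; apply: exprn_ile1 => //.
  apply: mulr_ge0; [lra|apply: exprn_ge0; lra].
have rT : (r * T' = k + T')%N by rewrite /k addnC -mulSn prednK.
have p1 : 0 < (1 - th) ^+ k by apply: exprn_gt0.
have p2 : 0 < (1 - th) ^+ T' by apply: exprn_gt0.
have pd : 0 < d ^+ T' by apply: exprn_gt0; lra.
have pa : 0 < (1 + a) ^+ (r * T') by apply: exprn_gt0; lra.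
have eq1 : (1 - th) ^+ (r * T') = (1 - th) ^+ k * (1 - th) ^+ T' by rewrite rT exprD.
rewrite eq1 -/N in h1.
have N0 : 0 <= N by apply: ler0n.
have h2 : d ^+ T' * (1 - th) ^+ k <= N * (1 - th) ^+ k * (1 - th) ^+ T'.
  apply: (le_trans (ler_wpM2l (ltW pd) h1)).
  set P := (1 - th) ^+ k in p1 *; set Q := (1 - th) ^+ T' in p2 *.
  set A := (1 + a) ^+ (r * T') in pa hd2 *; set D := d ^+ T' in pd hd2 *.
  have e : D * (N * (P * Q * A)) = (N * P * Q) * (D * A) by ring.
  rewrite e -[X in _ <= X]mulr1; apply: ler_wpM2l => //.
  by apply: mulr_ge0; [apply: mulr_ge0 => //; apply: ltW | apply: ltW].
have h3 : kap ^+ T' <= N.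
  rewrite /kap expr_div_n ler_pdivrMr // .
  have : d ^+ T' * (1 - th) ^+ k <= (N * (1 - th) ^+ T') * (1 - th) ^+ k.
    by move: h2; rewrite -mulrA (mulrC ((1 - th) ^+ k)) mulrA.
  by rewrite ler_pM2r.
have h4 := bern T' (ltW b0).
have h5 : N < T'%:R * b.
  have := truncnS_gt (N / b); rewrite -(ler_nat R) in hT => h6.
  have : N / b < T'%:R by apply: lt_le_trans h6 hT.
  by rewrite ltr_pdivrMr.
have eb : 1 + b = kap by rewrite /b addrC subrK.
rewrite eb in h4; lra.
Qed.
End MWUFinal.

Section Levels.
Variables (R : realType) (V : finType) (m : nat) (ord : 'I_m -> rel V).
Local Open Scope ring_scope.

Definition Dsum (K L : nat) : R := \sum_(l < L) (Num.sqrt (K * 2 ^ l)%:R)^-1.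

Lemma levels K : (0 < K)%N -> forall L (beta : R),
  (exists f : 'I_(K * 2 ^ L) -> V, forall v, beta * (K * 2 ^ L)%:R <= (\sum_k G ord (f k) v)%:R) ->
  exists g : 'I_K -> V, forall v, (beta - 6 * m%:R * Dsum K L) * K%:R <= (\sum_j G ord (g j) v)%:R.
Proof.
move=> K0; elim => [|L IH] beta.
  rewrite expn0 muln1 => [[f hf]]; exists f => v.
  by rewrite /Dsum big_ord0 mulr0 subr0; exact: hf.
rewrite (_ : (K * 2 ^ L.+1 = K * 2 ^ L + K * 2 ^ L)%N); last by rewrite expnS; lia.
move=> [f hf].
have n0 : (0 < K * 2 ^ L)%N by rewrite muln_gt0 K0 expn_gt0.
have [g hg] := halve n0 hf.
have [g' hg'] := IH _ (ex_intro _ g hg).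
exists g' => v; have := hg' v.
rewrite /Dsum big_ord_recr /=.
set D := \sum_(i < L) _.
set s := Num.sqrt _.
have e : beta - 6 * m%:R / s - 6 * m%:R * D = beta - 6 * m%:R * (D + s^-1) by ring.
by rewrite e.
Qed.

Lemma Dsum_le K L : (0 < K)%N -> Dsum K L <= 4 / Num.sqrt K%:R.
Proof.
move=> K0.
pose y (l : nat) : R := (Num.sqrt (K * 2 ^ l)%:R)^-1.
have sp : forall l, 0 < Num.sqrt (K * 2 ^ l)%:R :> R.
  by move=> l; rewrite sqrtr_gt0 ltr0n muln_gt0 K0 expn_gt0.
have y0 : forall l, 0 < y l by move=> l; rewrite /y invr_gt0.
have step : forall l, y l <= 4 * (y l - y l.+1).
  move=> l; rewrite /y.
  set s := Num.sqrt _; set s' := Num.sqrt _.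
  have hs := sp l; have hs' := sp l.+1.
  have q : s' ^+ 2 = 2 * s ^+ 2.
    rewrite /s /s' !sqr_sqrtr ?ler0n // expnS mulnCA natrM; ring.
  have h1 : 4 * s <= 3 * s'.
    case: (lerP (4 * s) (3 * s')) => // h.
    have : (3 * s') * (3 * s') < (4 * s) * (4 * s).
      by apply: ltr_pM => //; apply: mulr_ge0 => //; apply: ltW.
    have ss : 0 <= s * s by apply: mulr_ge0; apply: ltW.
    have q' : s' * s' = 2 * (s * s) by move: q; rewrite !expr2.
    move=> hh; suff : False by []; lra.
  have e : 4 * s'^-1 - 3 * s^-1 = (4 * s - 3 * s') * (s^-1 * s'^-1).
    by field; rewrite ?(gt_eqF hs) ?(gt_eqF hs').
  have h2 : (4 * s - 3 * s') * (s^-1 * s'^-1) <= 0.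
    apply: mulr_le0_ge0; first lra.
    by apply: mulr_ge0; apply: ltW; rewrite invr_gt0.
  lra.
have gen : forall L', Dsum K L' <= 4 * (y 0 - y L').
  elim => [|L' IH]; first by rewrite /Dsum big_ord0 subrr mulr0.
  rewrite /Dsum big_ord_recr /= -/(Dsum K L') -/(y L').
  have := step L'; lra.
apply: (le_trans (gen L)).
have := y0 L; set yl := y L => h. rewrite /y expn0 muln1. lra.
Qed.
End Levels.

Section Rank.
Variables (V : finType) (m : nat) (ord : 'I_m -> rel V).
Hypothesis hlin : forall i, linear_order (ord i).

Lemma rk_lt_of i x v : ord i x v -> x != v -> (rk ord i x < rk ord i v)%N.
Proof.
move=> hxv nxv; have [refl anti trans tot] := hlin i.
apply: proper_card; apply/properP; split.
  apply/subsetP => y; rewrite !inE => /andP [hyx nyx].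
  rewrite (trans _ _ _ hyx hxv) /=; apply/eqP => e.
  move: hyx; rewrite e => hvx; move/negP: nxv; apply; apply/eqP; apply: anti.
  by rewrite hxv hvx.
by exists x; rewrite !inE ?hxv ?nxv ?eqxx ?andbF.
Qed.

Lemma rk_lt i x v : (rk ord i x < rk ord i v)%N = ord i x v && (x != v).
Proof.
have [refl anti trans tot] := hlin i.
apply/idP/idP; last by move=> /andP [h1 h2]; apply: rk_lt_of.
move=> h; case: (boolP (x == v)) => [/eqP e|nxv]; first by move: h; rewrite e ltnn.
rewrite andbT; case: (boolP (ord i x v)) => // nxv'.
have hvx : ord i v x by move: (tot x v); rewrite (negbTE nxv').
have := rk_lt_of hvx; rewrite eq_sym => /(_ nxv) h2; lia.
Qed.

Lemma rk_le_ne i x v : x != v -> (rk ord i x <= rk ord i v)%N = (rk ord i x < rk ord i v)%N.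
Proof.
move=> nxv; have [refl anti trans tot] := hlin i.
rewrite leq_eqVlt; case: eqP => //= e.
case: (boolP (ord i x v)) => h.
  by have := rk_lt_of h nxv; rewrite e ltnn.
have hvx : ord i v x by move: (tot x v); rewrite (negbTE h).
by have := rk_lt_of hvx; rewrite eq_sym => /(_ nxv); rewrite e ltnn.
Qed.

Lemma G_nb x v : x != v -> G ord x v = (nb_below ord x v + nb_below ord x v)%N.
Proof.
move=> nxv; rewrite /G /nb_below.
have e : forall i : 'I_m, ((rk ord i x < rk ord i v) + (rk ord i x <= rk ord i v))%N =
   ((ord i x v && (x != v)) + (ord i x v && (x != v)))%N.
  by move=> i; rewrite rk_le_ne // rk_lt.
rewrite (eq_bigr (fun i : 'I_m => ((ord i x v && (x != v)) + (ord i x v && (x != v)))%N));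
  last by move=> i _; exact: e i.
rewrite big_split /=.
have c : (\sum_(i < m) (ord i x v && (x != v)))%N = #|[set i | ord i x v && (x != v)]|.
  rewrite -sum1_card [RHS]big_mkcond /=; apply: eq_bigr => i _; rewrite inE.
  by case: (_ && _).
by rewrite c.
Qed.
End Rank.

Section Final.
Variable R : realType.
Local Open Scope ring_scope.

Lemma avg_exists_ge (I : finType) (i0 : I) (F : I -> R) (c : R) :
  #|I|%:R * c <= \sum_i F i -> exists i, c <= F i.
Proof.
move=> h; case: (boolP [exists i, c <= F i]) => [/existsP //|/existsPn hn].
have : \sum_i F i < \sum_(i : I) c.
  apply: ltr_sum; first by apply/hasP; exists i0; rewrite ?mem_index_enum.
  by move=> i _; have := hn i; rewrite -ltNge.
rewrite sumr_const -mulr_natl; lra.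
Qed.

Lemma dn_le (V : finType) (E : rel V) (X : {set V}) :
  dominating E X -> (domination_number E <= #|X|)%N.
Proof.
move=> h; rewrite /domination_number.
have gen : forall (r : seq {set V}), X \in r ->
    (\big[minn/#|V|]_(Y <- r | dominating E Y) #|Y| <= #|X|)%N.
  elim => //= a r IH; rewrite in_cons big_cons; case/orP => [/eqP <-|hj].
    by rewrite h geq_minl.
  case: ifP => _; last exact: IH hj.
  by apply: leq_trans (geq_minr _ _) (IH hj).
exact: gen (mem_index_enum X).
Qed.

End Final.

Unset Implicit Arguments.
Local Open Scope ring_scope.

Theorem theorem1p15 (R : realType) :
  exists C : R, 0 < C /\
    forall (eps : R) (m : nat) (V : finType) (ord : 'I_m -> rel V),
      0 < eps -> eps < 1 / 2 -> (1 <= m)%N ->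
      (forall i, linear_order (ord i)) ->
      (domination_number (majority_arc (1 / 2 - eps) ord))%:R <= C / (eps ^+ 2).
Proof.
exists 1296; split; first lra.
move=> eps m V ord e0 e1 m1 hlin.
have e2 : 0 < eps ^+ 2 by apply: exprn_gt0.
have Cpos : 0 < 1296 / eps ^+ 2 :> R by apply: divr_gt0 => //; lra.
have e1' : 2 * eps < 1 by move: e1; rewrite ltr_pdivlMr // mulrC.
case: (pickP (fun _ : V => true)) => [x0 _|hV]; last first.
  have c0 : #|V| = 0%N by apply: eq_card0 => v; move: (hV v).
  have hd : dominating (majority_arc (1 / 2 - eps) ord) setT.
    by apply/forallP => v; rewrite inE.
  have := dn_le hd; rewrite cardsT c0 leqn0 => /eqP ->; lra.
set r := (Num.truncn eps^-1).+1.
have hr : eps^-1 < r%:R by apply: truncnS_gt.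
have hr2 : r%:R <= eps^-1 + 1.
  by rewrite /r -natr1 lerD2r truncn_le invr_ge0 ltW.
have r0 : (0 < r)%N by [].
have rR : 0 < r%:R :> R by rewrite ltr0n.
set K := (r * (576 * r))%N.
have K0 : (0 < K)%N by rewrite /K !muln_gt0 r0.
have [T0 hT0] := mwu_final R ord x0 m1 r0.
set T' := (576 * r * 2 ^ T0)%N.
have hT' : (T0 <= T')%N.
  have := ltn_expl T0 (isT : (1 < 2)%N); rewrite /T'; set w := (2 ^ T0)%N; nia.
have [s [hs hsv]] := hT0 T' hT'.
have hsz : (r * T' = K * 2 ^ T0)%N by rewrite /T' /K !mulnA.
set beta : R := (1 - r%:R^-1) * m%:R.
have hf : exists f : 'I_(K * 2 ^ T0) -> V, forall v,
    beta * (K * 2 ^ T0)%:R <= (\sum_k G ord (f k) v)%:R.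
  rewrite -hsz -hs; exists (fun k : 'I_(size s) => nth x0 s k) => v.
  have e : (\sum_(k < size s) G ord (nth x0 s k) v)%N = (\sum_(u <- s) G ord u v)%N.
    by rewrite (big_nth x0) big_mkord.
  rewrite e; have := hsv v; rewrite -(ler_nat R) => h.
  apply: le_trans h; rewrite hs.
  have pr : (r.-1)%:R = r%:R - 1 :> R by rewrite -{2}(prednK r0) -natr1 addrK.
  rewrite !natrM pr /beta le_eqVlt; apply/predU1P; left.
  by field; rewrite gt_eqF.
have [g hg] := levels K0 hf.
have hD := Dsum_le R T0 K0.
have sK : Num.sqrt K%:R = 24 * r%:R :> R.
  have -> : K%:R = (24 * r%:R) ^+ 2 :> R by rewrite /K !natrM; ring.
  by rewrite sqrtr_sqr ger0_norm //; apply: mulr_ge0; [lra|apply: ltW].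
rewrite sK in hD.
set ir := r%:R^-1 : R.
have hir : ir < eps.
  rewrite /ir -[eps]invrK ltf_pV2 ?posrE ?invr_gt0 //.
have hD' : Dsum R K T0 <= ir / 6.
  apply: (le_trans hD); rewrite le_eqVlt; apply/predU1P; left.
  by rewrite /ir; field; rewrite gt_eqF.
have mR : 0 <= m%:R :> R by apply: ler0n.
have hv : forall v, (1 - 2 * eps) * m%:R * K%:R <= (\sum_j G ord (g j) v)%:R.
  move=> v; apply: le_trans (hg v).
  apply: ler_wpM2r; first by apply: ler0n.
  have h1 : m%:R * ir <= m%:R * eps by apply: ler_wpM2l => //; apply: ltW.
  have h2 : 6 * m%:R * Dsum R K T0 <= m%:R * ir.
    have h6 : 6 * Dsum R K T0 <= ir by move: hD'; rewrite ler_pdivlMr // mulrC.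
    have : m%:R * (6 * Dsum R K T0) <= m%:R * ir by apply: ler_wpM2l.
    by rewrite mulrA (mulrC m%:R).
  rewrite /beta -/ir; lra.
set X := [set g j | j in 'I_K].
have hdom : dominating (majority_arc (1 / 2 - eps) ord) X.
  apply/forallP => v.
  have hv' : #|'I_K|%:R * ((1 - 2 * eps) * m%:R) <= \sum_j (G ord (g j) v)%:R.
    by rewrite card_ord -natr_sum mulrC; apply: hv.
  have [j hj] := avg_exists_ge (Ordinal K0) hv'.
  case: (eqVneq (g j) v) => [e|ne].
    by apply/orP; left; rewrite -e; apply: imset_f.
  apply/orP; right; apply/existsP; exists (g j); rewrite imset_f //=.
  rewrite /majority_arc ne /=.
  move: hj; rewrite (G_nb hlin ne) natrD.
  set nb := (nb_below ord (g j) v)%:R.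
  have : (1 / 2 - eps) * m%:R = (1 - 2 * eps) * m%:R / 2 by field.
  move=> ->; move=> hj; rewrite ler_pdivrMr //; lra.
have hX : (#|X| <= K)%N.
  by apply: leq_trans (leq_imset_card _ _) _; rewrite card_ord.
have hdn := leq_trans (dn_le hdom) hX.
apply: (le_trans (y := K%:R)); first by rewrite ler_nat.
rewrite ler_pdivlMr //.
have h3 : r%:R * eps <= 1 + eps.
  have : r%:R * eps <= (eps^-1 + 1) * eps by apply: ler_wpM2r => //; apply: ltW.
  by rewrite mulrDl mulVf ?gt_eqF // mul1r.
have h4 : 0 <= r%:R * eps by apply: mulr_ge0; apply: ltW.
have h5 : (r%:R * eps) ^+ 2 <= (3 / 2) ^+ 2.
  by apply: lerXn2r; rewrite ?nnegrE //; lra.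
have -> : K%:R * eps ^+ 2 = 576 * (r%:R * eps) ^+ 2 :> R by rewrite /K !natrM; ring.
lra.
Qed.
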